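(* Consider a single transmission ($L=1$) over the Rayleigh block-fading Gaussian wiretap channel, with mean SNRs $\gamma_{\textsf{d}}>0$ (legitimate decoder) and $\gamma_{\textsf{e}}>0$ (eavesdropper), and constraints $\xi_{\sf{c}},\xi_{\sf{s}}\in(0,1)$. (i) There exist rates $\textsf{R}\ge0$ and $\textsf{R}_1\ge0$ with $\mathcal{P}_{\sf{co}}\le\xi_{\sf{c}}$ and $\mathcal{P}_{\sf{so}}\le\xi_{\sf{s}}$ if and only if $\xi_{\sf{s}}\ge(1-\xi_{\sf{c}})^{\gamma_{\textsf{d}}/\gamma_{\textsf{e}}}$, equivalently $\xi_{\sf{s}}^{\gamma_{\textsf{e}}}-(1-\xi_{\sf{c}})^{\gamma_{\textsf{d}}}\ge0$. (ii) For a fixed $\textsf{R}\ge0$, there exists $\textsf{R}_1\ge0$ with $\mathcal{P}_{\sf{co}}\le\xi_{\sf{c}}$ and $\mathcal{P}_{\sf{so}}\le\xi_{\sf{s}}$ if and only if $$\textsf{R}\le\log_2\Big(\frac{1-\gamma_{\textsf{d}}\ln(1-\xi_{\sf{c}})}{1-\gamma_{\textsf{e}}\ln(\xi_{\sf{s}})}\Big).$$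
   Context: Channel: $Y=h_{\textsf{d}}X+N_{\textsf{d}}$, $Z=h_{\textsf{e}}X+N_{\textsf{e}}$ with unit-variance Gaussian noises and input power $1$. $\textsf{SNR}_{\textsf{d}}=|h_{\textsf{d}}|^2$ and $\textsf{SNR}_{\textsf{e}}=|h_{\textsf{e}}|^2$ are independent exponential random variables with means $\gamma_{\textsf{d}}$ and $\gamma_{\textsf{e}}$ (CDF $1-e^{-x/\gamma}$ for $x\ge0$). Mutual informations: $I(X;Y)=\log_2(1+\textsf{SNR}_{\textsf{d}})$, $I(X;Z)=\log_2(1+\textsf{SNR}_{\textsf{e}})$. With secrecy rate $\textsf{R}$ and dummy-message rate $\textsf{R}_1$, the connection outage probability is $\mathcal{P}_{\sf{co}}=\mathcal{P}(\textsf{R}+\textsf{R}_1>\log_2(1+\textsf{SNR}_{\textsf{d}}))$ and the secrecy outage probability is $\mathcal{P}_{\sf{so}}=\mathcal{P}(\textsf{R}_1<\log_2(1+\textsf{SNR}_{\textsf{e}}))$. *)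

(* Defs.v *)
From HB Require Import structures.
From mathcomp Require Import all_boot all_order all_algebra.
From mathcomp Require Import all_classical all_reals all_analysis.
Set Implicit Arguments. Unset Strict Implicit. Unset Printing Implicit Defensive.
Import Order.TTheory GRing.Theory Num.Theory.
Local Open Scope classical_set_scope.
Local Open Scope ring_scope.

Definition log2 {R : realType} (x : R) : R := ln x / ln 2.

Definition expo_cdf {R : realType} (gamma x : R) : R :=
  if 0 <= x then 1 - expR (- x / gamma) else 0.

Definition is_exponential {R : realType} {d} {T : measurableType d}
  (P : probability T R) (X : T -> R) (gamma : R) : Prop :=
  forall x : R, P [set w | X w <= x] = (expo_cdf gamma x)%:E.

Definition P_co {R : realType} {d} {T : measurableType d}
  (P : probability T R) (SNRd : T -> R) (Rs R1 : R) : \bar R :=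
  P [set w | log2 (1 + SNRd w) < Rs + R1].

Definition P_so {R : realType} {d} {T : measurableType d}
  (P : probability T R) (SNRe : T -> R) (R1 : R) : \bar R :=
  P [set w | R1 < log2 (1 + SNRe w)].

(* Main.v *)
Require Import Defs.
From HB Require Import structures.
From mathcomp Require Import all_boot all_order all_algebra.
From mathcomp Require Import all_classical all_reals all_analysis.
From mathcomp Require Import ring lra.
Import Order.TTheory GRing.Theory Num.Theory.
Local Open Scope classical_set_scope.
Local Open Scope ring_scope.

Lemma mlog (R : realType) : measurable_fun [set: R] (fun y => log2 (1 + y)).
Proof.
rewrite /log2.
have -> : (fun y : R => ln (1 + y) / ln 2) =
  ( *%R^~ (ln 2)^-1) \o (@ln R \o (fun y => 1 + y)) by [].
apply: measurableT_comp; first exact: measurable_realfun.mulrr_measurable.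
apply: measurableT_comp; first exact: measurable_realfun.measurable_ln.
by apply: measurable_realfun.measurable_funD => //; exact: measurable_cst.
Qed.

Lemma mlt (R : realType) d (T : measurableType d) (f : T -> R) c :
  measurable_fun setT f -> measurable [set w | f w < c].
Proof.
move=> mf; rewrite (_ : [set w | f w < c] = setT `&` f @^-1` `]-oo, c[).
  exact: mf.
by apply/seteqP; split=> w /=; rewrite in_itv /=; [by [] | by case].
Qed.

Lemma mle (R : realType) d (T : measurableType d) (f : T -> R) c :
  measurable_fun setT f -> measurable [set w | f w <= c].
Proof.
move=> mf; rewrite (_ : [set w | f w <= c] = setT `&` f @^-1` `]-oo, c]).
  exact: mf.
by apply/seteqP; split=> w /=; rewrite in_itv /=; [by [] | by case].
Qed.

Section real.
Variable R : realType.

Lemma ln2_gt0 : 0 < ln (2 : R).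
Proof. by apply: ln_gt0; rewrite ltr1n. Qed.

Lemma r1 (y s : R) : log2 (1 + y) < s -> y <= expR (s * ln 2) - 1.
Proof.
have h2 := ln2_gt0.
have he := expR_gt0 (s * ln 2).
case: (lerP y (-1)) => hy; first by move=> _; lra.
rewrite /log2 ltr_pdivrMr // => hl.
have hp : 0 < 1 + y by lra.
have : expR (ln (1 + y)) < expR (s * ln 2) by rewrite ltr_expR.
rewrite lnK ?posrE //; lra.
Qed.

Lemma r2 (y s : R) : -1 < y -> y < expR (s * ln 2) - 1 -> log2 (1 + y) < s.
Proof.
have h2 := ln2_gt0.
move=> hy hl; rewrite /log2 ltr_pdivrMr //.
rewrite -[X in _ < X]expRK ltr_ln ?posrE ?expR_gt0 //; lra.
Qed.

Lemma r3 (y s : R) : 0 <= s -> (s < log2 (1 + y)) = (expR (s * ln 2) - 1 < y).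
Proof.
have h2 := ln2_gt0.
move=> hs.
have he : 1 <= expR (s * ln 2).
  have := expR_ge1Dx (s * ln 2); have : 0 <= s * ln 2 by rewrite mulr_ge0 // ltW.
  lra.
case: (lerP y (-1)) => hy.
  rewrite /log2 ln0; last by lra.
  rewrite mul0r; apply/idP/idP => h; lra.
have hp : 0 < 1 + y by lra.
rewrite /log2 ltr_pdivlMr // -ltr_expR lnK ?posrE //.
apply/idP/idP => h; lra.
Qed.

Lemma cdf_le (g x t : R) : 0 < g -> 0 < x < 1 ->
  (expo_cdf g t <= x) <-> t <= - (g * ln (1 - x)).
Proof.
move=> hg /andP[hx0 hx1].
have hc : ln (1 - x) < 0 by apply: ln_lt0; apply/andP; split; lra.
have hA : 0 < - (g * ln (1 - x)).
  by rewrite oppr_gt0 pmulr_rlt0.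
rewrite /expo_cdf; case: ifP => ht.
  have -> : 1 - expR (- t / g) <= x = (1 - x <= expR (- t / g)).
    by apply/idP/idP => h; lra.
  rewrite -[X in X <= _]lnK ?posrE; last by lra.
  rewrite ler_expR ler_pdivlMr // mulrC.
  by split => h; lra.
move/negbT: ht; rewrite -ltNge => ht.
by split => _; lra.
Qed.

Lemma so_le (g x u : R) : 0 < g -> 0 < x < 1 ->
  (expR (- u / g) <= x) <-> - (g * ln x) <= u.
Proof.
move=> hg /andP[hx0 hx1].
rewrite -[X in _ <= X]lnK ?posrE //.
rewrite ler_expR ler_pdivrMr // mulrC.
by split => h; lra.
Qed.

End real.

Section meas.
Variables (R : realType) (d : measure_display) (T : measurableType d).
Variable (P : probability T R).

Lemma co_iff (X : {RV P >-> R}) (g x s : R) : 0 < g -> 0 < x < 1 ->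
  is_exponential P X g ->
  ((P [set w | (log2 (1 + X w) < s)%R] <= x%:E)%E <->
   expR (s * ln 2) - 1 <= - (g * ln (1 - x))).
Proof.
move=> hg hx hX.
have mX : measurable_fun setT X := measurable_funPT X.
have mS : measurable [set w | log2 (1 + X w) < s].
  apply: mlt; exact: (measurableT_comp (mlog R) mX).
set t := expR (s * ln 2) - 1.
split => [hP | ht].
  have hA : 0 < - (g * ln (1 - x)).
    have hc : ln (1 - x) < 0.
      by apply: ln_lt0; move: hx => /andP[? ?]; apply/andP; split; lra.
    by rewrite oppr_gt0 pmulr_rlt0.
  rewrite leNgt; apply/negP => hlt.
  set a := (- (g * ln (1 - x)) + t) / 2.
  have ha1 : - (g * ln (1 - x)) < a by rewrite /a; lra.
  have ha2 : a < t by rewrite /a; lra.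
  have hsub : [set w | X w <= a] `<=` [set w | log2 (1 + X w) < s] `|` [set w | X w <= -1].
    move=> w /= hw; case: (lerP (X w) (-1)) => hw1; [by right | left].
    by apply: r2; move: ha2 hw hw1; rewrite /t; lra.
  have : (P [set w | (X w <= a)%R] <= x%:E)%E.
    apply: (le_trans (le_measure _ _ _ hsub)); rewrite ?inE.
    - exact: mle.
    - by apply: measurableU => //; exact: mle.
    apply: (le_trans (measureU2 _ _ _)) => //; first exact: mle.
    rewrite [X in (_ + X)%E](_ : _ = 0%E) ?adde0 //.
    apply: (eq_trans (hX (-1))); rewrite /expo_cdf; case: ifP => [h|//]; exfalso; lra.
  rewrite hX lee_fin => /(@cdf_le _ g x _ hg hx); lra.
apply: (@le_trans _ _ (P [set w | X w <= t])).
  apply: le_measure; rewrite ?inE //; first exact: mle.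
  by move=> w /= /r1.
by rewrite hX lee_fin; apply/(@cdf_le _ g x _ hg hx).
Qed.

Lemma so_iff (X : {RV P >-> R}) (g x r : R) : 0 < g -> 0 < x < 1 -> 0 <= r ->
  is_exponential P X g ->
  ((P [set w | (r < log2 (1 + X w))%R] <= x%:E)%E <->
   - (g * ln x) <= expR (r * ln 2) - 1).
Proof.
move=> hg hx hr hX.
have mX : measurable_fun setT X := measurable_funPT X.
set u := expR (r * ln 2) - 1.
have hu : 0 <= u.
  have := expR_ge1Dx (r * ln 2); have : 0 <= r * ln 2 by rewrite mulr_ge0 // ltW ?ln2_gt0.
  rewrite /u; lra.
have -> : [set w | r < log2 (1 + X w)] = ~` [set w | X w <= u].
  apply/seteqP; split => w /=; rewrite r3 // -/u; first by move=> h h'; lra.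
  by move/negP; rewrite -ltNge.
rewrite probability_setC; last exact: mle.
rewrite hX /expo_cdf hu -EFinB lee_fin.
have -> : 1 - (1 - expR (- u / g)) = expR (- u / g) by ring.
exact: so_le.
Qed.

End meas.

Lemma expR_le_ln (R : realType) (z y : R) : 0 < y -> (expR z <= y) = (z <= ln y).
Proof. by move=> hy; rewrite -[X in _ <= X](@lnK _ y) ?posrE // ler_expR. Qed.

Lemma ln_le_expR (R : realType) (z y : R) : 0 < y -> (y <= expR z) = (ln y <= z).
Proof. by move=> hy; rewrite -[X in X <= _](@lnK _ y) ?posrE // ler_expR. Qed.

Theorem theorem2 (R : realType) (d : measure_display) (T : measurableType d)
  (P : probability T R) (SNRd SNRe : {RV P >-> R})
  (gd ge xic xis : R)
  (hgd : 0 < gd) (hge : 0 < ge)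
  (hxic0 : 0 < xic) (hxic1 : xic < 1) (hxis0 : 0 < xis) (hxis1 : xis < 1)
  (hd : is_exponential P SNRd gd) (he : is_exponential P SNRe ge) :
  ((exists Rs R1 : R, [/\ 0 <= Rs, 0 <= R1,
        (P_co P SNRd Rs R1 <= xic%:E)%E & (P_so P SNRe R1 <= xis%:E)%E])
     <-> (1 - xic) `^ (gd / ge) <= xis)
  /\ ((1 - xic) `^ (gd / ge) <= xis <-> 0 <= xis `^ ge - (1 - xic) `^ gd)
  /\ (forall Rs : R, 0 <= Rs ->
        ((exists R1 : R, [/\ 0 <= R1,
            (P_co P SNRd Rs R1 <= xic%:E)%E & (P_so P SNRe R1 <= xis%:E)%E])
         <-> Rs <= log2 ((1 - gd * ln (1 - xic)) / (1 - ge * ln xis)))).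
Proof.
have hL := @ln2_gt0 R.
have hxc : 0 < xic < 1 by apply/andP.
have hxs : 0 < xis < 1 by apply/andP.
have hc : ln (1 - xic) < 0 by apply: ln_lt0; apply/andP; split; lra.
have he0 : ln xis < 0 by apply: ln_lt0; apply/andP.
have hco := fun Rs R1 => @co_iff R d T P SNRd gd xic (Rs + R1) hgd hxc hd.
have hso := fun R1 (h : 0 <= R1) => @so_iff R d T P SNRe ge xis R1 hge hxs h he.
set c := ln (1 - xic) in hc hco *.
set e := ln xis in he0 hso *.
have hA : 0 < - (gd * c) by rewrite oppr_gt0 pmulr_rlt0.
have hB : 0 < - (ge * e) by rewrite oppr_gt0 pmulr_rlt0.
rewrite /P_co /P_so.
have hpow : (1 - xic) `^ (gd / ge) <= xis <-> gd * c <= ge * e.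
  rewrite /powR ifN; last by apply/eqP; lra.
  rewrite -/c expR_le_ln // -/e mulrAC ler_pdivrMr // [e * ge]mulrC.
  by [].
have hB1 : 0 <= ln (1 - ge * e) / ln 2.
  by rewrite divr_ge0 ?ln_ge0 ?ltW //; lra.
have hEB : expR (ln (1 - ge * e) / ln 2 * ln 2) = 1 - ge * e.
  by rewrite divfK ?gt_eqF // lnK // posrE; lra.
split; last split.
- rewrite hpow; split.
    move=> [Rs [R1 [hRs hR1 /hco h1 /(hso _ hR1) h2]]].
    have : expR (R1 * ln 2) <= expR ((Rs + R1) * ln 2).
      by rewrite ler_expR ler_pM2r // lerDr.
    lra.
  move=> h; exists 0, (ln (1 - ge * e) / ln 2); split => //.
    by apply/hco; rewrite add0r hEB; lra.
  by apply/(hso _ hB1); rewrite hEB; lra.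
- rewrite hpow subr_ge0 /powR !ifN; last by apply/eqP; lra.
    by rewrite ler_expR -/c -/e.
  by apply/eqP; lra.
move=> Rs hRs.
have hAp : 0 < 1 - gd * c by lra.
have hBp : 0 < 1 - ge * e by lra.
rewrite /log2 ler_pdivlMr // ln_div ?posrE //.
split.
  move=> [R1 [hR1 /hco h1 /(hso _ hR1) h2]].
  have h1' : expR ((Rs + R1) * ln 2) <= 1 - gd * c by lra.
  have h2' : 1 - ge * e <= expR (R1 * ln 2) by lra.
  rewrite expR_le_ln // in h1'.
  rewrite ln_le_expR // in h2'.
  move: h1'; rewrite mulrDl; lra.
move=> h; exists (ln (1 - ge * e) / ln 2); split => //.
  apply/hco; rewrite mulrDl expRD hEB.
  suff : expR (Rs * ln 2) * (1 - ge * e) <= 1 - gd * c by lra.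
  have -> : expR (Rs * ln 2) * (1 - ge * e) = expR (Rs * ln 2 + ln (1 - ge * e)).
    by rewrite expRD lnK // posrE.
  rewrite expR_le_ln //; lra.
by apply/(hso _ hB1); rewrite hEB; lra.
Qed.
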